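(* Consider the linear network processes (all activation and output functions replaced by the identity) with input $x^{(t)}\in\mathbb{R}^{p_x}$ and i.i.d. errors $\varepsilon^{(t)}$: (RNN) $y^{(t)}=W_{zh}h^{(t)}+\varepsilon^{(t)}$, $h^{(t)}=W_{hh}h^{(t-1)}+W_{hx}x^{(t)}$; (MRNNF) $y^{(t)}=W_{zh}h^{(t)}+W_{zm}m^{(t)}+\varepsilon^{(t)}$, $h^{(t)}=W_{hh}h^{(t-1)}+W_{hx}x^{(t)}$, $m^{(t)}=W_{mm}m^{(t-1)}+W_{mf}\big((I-\mathcal{B})^d-I\big)x^{(t)}$, with a constant memory parameter $d=(d_1,\dots,d_{p_x})'$, $d_i\in(0,0.5)$. Then, in terms of the definition of long memory network process below, the MRNNF has the capability of handling long-range dependence data (its linear network process can have long memory), while the RNN cannot (its linear network process never has long memory).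
   Context: $B$ is the backshift operator, $B^jX_t=X_{t-j}$. For scalar $d$, $(1-B)^d=\sum_{j=0}^\infty w_j(d)B^j$ with $w_j(d)=\Gamma(j-d)/(j!\,\Gamma(-d))=\prod_{i=0}^{j-1}(i-d)/(i+1)$, and $w_j(d)$ is asymptotically proportional to $j^{-d-1}$. For a vector $d=(d_1,\dots,d_{p_x})'$, $(I-\mathcal{B})^d$ is the diagonal operator $\mathrm{diag}((1-B)^{d_1},\dots,(1-B)^{d_{p_x}})$ acting componentwise. A network process of the form $y^{(t)}=\sum_{k=0}^\infty A_k x^{(t-k)}+\varepsilon^{(t)}$ with coefficient matrices $A_k$ and i.i.d. $\varepsilon^{(t)}$ has long memory if there exist indices $i,j$ and $d\in(0,0.5)$ such that $(A_k)_{ij}\sim k^{-d-1}$ as $k\to\infty$ (decay at this polynomial rate). A network is said to have the capability of handling long-range dependence data if its linear network process (obtained by letting all output and activation functions be the identity) has long memory in this sense. *)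

(* Defs.v *)
From HB Require Import structures.
From mathcomp Require Import all_boot all_order all_algebra.
From mathcomp Require Import all_classical all_reals all_analysis.
Set Implicit Arguments. Unset Strict Implicit. Unset Printing Implicit Defensive.
Import Order.TTheory GRing.Theory Num.Theory.
Import numFieldNormedType.Exports.
Local Open Scope classical_set_scope.
Local Open Scope ring_scope.

(* Fractional differencing weights: (1-B)^d = \sum_j w_j(d) B^j,
   w_j(d) = \prod_{i=0}^{j-1} (i - d)/(i + 1). *)
Definition fdw {R : realType} (d : R) (j : nat) : R :=
  \prod_(i < j) ((i%:R - d) / (i.+1)%:R).

(* Coefficient matrix of B^j in ((I - B)^d - I), d a vector of memory
   parameters acting componentwise (diagonal operator). For j = 0 the
   coefficient is I - I = 0. *)
Definition fd_minus_I_coef {R : realType} (px : nat) (d : 'I_px -> R) (j : nat)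
  : 'M[R]_px :=
  if j == 0%N then 0 else \matrix_(a < px, b < px) (if a == b then fdw (d a) j else 0).

(* Long memory of a network process y_t = \sum_k A_k x_{t-k} + eps_t:
   some entry (A_k)_{ij} ~ k^{-dd-1}, i.e. (A_k)_{ij} * k^{dd+1} converges
   to a nonzero constant, for some dd in (0, 1/2). *)
Definition long_memory {R : realType} (py px : nat) (A : nat -> 'M[R]_(py, px))
  : Prop :=
  exists (i : 'I_py) (j : 'I_px) (dd : R), 0 < dd < 1/2 /\
    exists c : R, c != 0 /\
      (fun k : nat => A k i j * powR (k%:R) (dd + 1)) @ \oo --> c.

(* Linear RNN: y_t = Wzh h_t + eps_t, h_t = Whh h_{t-1} + Whx x_t.
   Unrolling: y_t = \sum_k Wzh Whh^k Whx x_{t-k} + eps_t. *)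
Definition rnn_coef {R : realType} (py ph px : nat)
  (Wzh : 'M[R]_(py, ph)) (Whh : 'M[R]_ph) (Whx : 'M[R]_(ph, px)) (k : nat)
  : 'M[R]_(py, px) :=
  Wzh *m (Whh ^+ k) *m Whx.

(* Linear MRNNF: additionally m_t = Wmm m_{t-1} + Wmf ((I-B)^d - I) x_t and
   y_t = Wzh h_t + Wzm m_t + eps_t. Unrolling:
   m_t = \sum_l Wmm^l Wmf \sum_j C_j x_{t-l-j}, with C_j the coefficients of
   ((I-B)^d - I), so the coefficient of x_{t-k} is
   Wzh Whh^k Whx + Wzm \sum_{l=0}^k Wmm^l Wmf C_{k-l}. *)
Definition mrnnf_coef {R : realType} (py ph pm px : nat)
  (Wzh : 'M[R]_(py, ph)) (Whh : 'M[R]_ph) (Whx : 'M[R]_(ph, px))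
  (Wzm : 'M[R]_(py, pm)) (Wmm : 'M[R]_pm) (Wmf : 'M[R]_(pm, px))
  (d : 'I_px -> R) (k : nat) : 'M[R]_(py, px) :=
  rnn_coef Wzh Whh Whx k +
  Wzm *m (\sum_(l < k.+1) (Wmm ^+ l) *m Wmf *m fd_minus_I_coef d (k - l)).

(* Main.v *)
Require Import Defs.
From HB Require Import structures.
From mathcomp Require Import all_boot all_order all_algebra.
From mathcomp Require Import all_classical all_reals all_analysis.
From mathcomp Require Import ring lra.
Import Order.TTheory GRing.Theory Num.Theory.
Import numFieldNormedType.Exports.
Local Open Scope ring_scope.

Section Aux.
Local Open Scope classical_set_scope.
Variable R : realType.

Lemma bern (x t : R) : 0 < x -> 0 <= t -> t <= 1 ->
  powR x t <= t * x + (1 - t).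
Proof.
move=> x0 t0 t1.
have := @convex_expR R (Itv01 t0 t1) (ln x) 0.
rewrite !convRE /= expR0 lnK ?posrE // mulr0 addr0 mulr1.
by rewrite /powR gt_eqF // mulrC.
Qed.

Lemma fdw_S (d : R) k : fdw d k.+1 = fdw d k * ((k%:R - d) / (k.+1)%:R).
Proof. by rewrite /fdw big_ord_recr. Qed.

Lemma fdw_neg (d : R) k : 0 < d < 1 -> (0 < k)%N -> fdw d k < 0.
Proof.
move=> /andP[d0 d1]; elim: k => // k IH _.
rewrite fdw_S; case: k IH => [|k] IH.
  by rewrite /fdw big_ord0 mul1r sub0r divr1 oppr_lt0.
have hf : 0 < (k.+1%:R - d) / (k.+2)%:R.
  apply: divr_gt0 => //; rewrite subr_gt0; apply: lt_le_trans d1 _.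
  by rewrite ler1n.
by rewrite pmulr_llt0 // IH.
Qed.

Lemma lm_fdw (d : R) : 0 < d < 1/2 ->
  exists c : R, c != 0 /\ (fun k : nat => fdw d k * powR k%:R (d + 1)) @ \oo --> c.
Proof.
move=> /andP[d0 d12].
have d1 : d < 1 by lra.
have d01 : 0 < d < 1 by rewrite d0 d1.
pose W k := - fdw d k.
pose v k := W k * (k%:R * powR k%:R d).
have vE : forall k, fdw d k * powR k%:R (d + 1) = - v k.
  move=> k; rewrite powRD; last by rewrite implybE gt_eqF ?orTb // ltr_wpDl // ltW.
  by rewrite powRr1 // /v /W; ring.
have Wpos : forall k, (0 < k)%N -> 0 < W k.
  by move=> k k0; rewrite /W oppr_gt0 fdw_neg.
have vS : forall k, v k.+1 = W k * ((k%:R - d) * powR (k.+1)%:R d).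
  move=> k; rewrite /v /W fdw_S; field.
  by rewrite addrC natr1 pnatr_eq0.
have Ppos : forall k, (0 < k)%N -> 0 < powR k%:R d.
  by move=> k k0; rewrite powR_gt0 // ltr0n.
have vpos : forall k, (0 < k)%N -> 0 < v k.
  by move=> k k0; rewrite /v mulr_gt0 ?Wpos // mulr_gt0 ?ltr0n ?Ppos.
have mono : forall k, (0 < k)%N -> v k.+1 <= v k.
  move=> k k0; rewrite vS /v ler_pM2l ?Wpos //.
  have kR : 1 <= k%:R :> R by rewrite ler1n.
  have kn0 : k%:R != 0 :> R by rewrite pnatr_eq0 -lt0n.
  have -> : powR (k.+1)%:R d = powR k%:R d * powR ((k.+1)%:R / k%:R) d.
    rewrite -powRM ?ler0n ?divr_ge0 //; congr powR.
    by rewrite mulrC divfK.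
  set B := powR ((k.+1)%:R / k%:R) d.
  have hB : B <= d * ((k.+1)%:R / k%:R) + (1 - d).
    by apply: bern; [rewrite divr_gt0 ?ltr0n | exact: ltW | exact: ltW].
  have hB' : k%:R * B <= k%:R + d.
    apply: le_trans (ler_wpM2l (ler0n _ k) hB) _.
    rewrite le_eqVlt; apply/orP; left; apply/eqP; rewrite -natr1; field.
    by [].
  have B0 : 0 <= B by apply: powR_ge0.
  have P0 := Ppos k k0.
  have : (k%:R - d) * B <= k%:R by nra.
  by nra.
have lower : forall k, (2 <= k)%N -> v 2 / 2 <= v k * (k%:R - 1) / k%:R.
  elim=> // k IH k2.
  case: (leqP 2 k) => [k1|k1].
  - apply: le_trans (IH k1) _.
    have k0 : (0 < k)%N by apply: leq_trans k1.
    have kR : 2 <= k%:R :> R by rewrite ler_nat.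
    have kn0 : k%:R != 0 :> R by rewrite pnatr_eq0 -lt0n.
    have k1n0 : k%:R + 1 != 0 :> R by rewrite natr1 pnatr_eq0.
    rewrite vS /v.
    have -> : powR k%:R d = powR (k.+1)%:R d * powR (k%:R / (k.+1)%:R) d.
      rewrite -powRM ?ler0n ?divr_ge0 //; congr powR.
      by rewrite mulrC divfK // pnatr_eq0.
    set C := powR (k%:R / (k.+1)%:R) d.
    set Q := powR (k.+1)%:R d.
    have hC : C <= d * (k%:R / (k.+1)%:R) + (1 - d).
      by apply: bern; [rewrite divr_gt0 ?ltr0n | exact: ltW | exact: ltW].
    have hC' : (k%:R + 1) * C <= k%:R + 1 - d.
      apply: le_trans (ler_wpM2l _ hC) _; first by lra.
      rewrite le_eqVlt; apply/orP; left; apply/eqP; rewrite -natr1; field.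
      by rewrite natr1 pnatr_eq0.
    have C0 : 0 <= C by apply: powR_ge0.
    have Q0 : 0 < Q by apply: powR_gt0; rewrite ltr0n.
    have W0 := Wpos k k0.
    rewrite -natr1.
    have -> : W k * (k%:R * (Q * C)) * (k%:R - 1) / k%:R =
              (W k * Q) * (C * (k%:R - 1)) by field.
    have -> : W k * ((k%:R - d) * Q) * (k%:R + 1 - 1) / (k%:R + 1) =
              (W k * Q) * ((k%:R - d) * k%:R / (k%:R + 1)) by field.
    rewrite ler_pM2l ?mulr_gt0 // ler_pdivlMr; last by lra.
    by nra.
  - have -> : k = 1%N by apply/eqP; rewrite eqn_leq -ltnS k1 -ltnS k2.
    rewrite /v /W fdw_S.
    rewrite le_eqVlt; apply/orP; left; apply/eqP.
    rewrite /fdw !big_ord_recr big_ord0 /=.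
    by field.
pose u := fun n : nat => v (n + 2)%N.
have v2 : 0 < v 2 by apply: vpos.
have ulb : forall n, v 2 / 2 <= u n.
  move=> n; apply: le_trans (lower (n + 2)%N (leq_addl _ _)) _.
  have hk : 0 < (n + 2)%N%:R :> R by rewrite ltr0n addn2.
  have vp : 0 < v (n + 2)%N by apply: vpos; rewrite addn2.
  rewrite /u.
  rewrite ler_pdivrMr // ler_pM2l //.
  by rewrite gerBl.
have un : nonincreasing_seq u.
  by apply/nonincreasing_seqP => n; rewrite /u addSn; apply: mono; rewrite addn2.
have cu : cvgn u.
  apply: nonincreasing_is_cvgn => //.
  by exists (v 2 / 2) => _ [n _ <-]; apply: ulb.
have hL : v 2 / 2 <= limn u.
  by apply: limr_ge => //; near=> n; apply: ulb.
exists (- limn u); split.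
  by rewrite oppr_eq0 gt_eqF //; apply: lt_le_trans hL; rewrite divr_gt0.
have -> : (fun k : nat => fdw d k * powR k%:R (d + 1)) = fun k => - v k.
  by apply: funext => k; rewrite vE.
apply: cvgN.
by rewrite -(cvg_shiftn 2).
Unshelve. all: by end_near.
Qed.

Lemma cvg_sum_ord (n : nat) (u : 'I_n -> nat -> R) (l : 'I_n -> R) :
  (forall m, u m @ \oo --> l m) ->
  (fun k => \sum_(m < n) u m k) @ \oo --> \sum_(m < n) l m.
Proof.
elim: n u l => [|n IH] u l H.
  under eq_fun do rewrite big_ord0.
  by rewrite big_ord0; exact: cvg_cst.
under eq_fun do rewrite big_ord_recr /=.
rewrite big_ord_recr /=.
apply: cvgD; last exact: H.
exact: (IH (fun m => u (widen_ord (leqnSn n) m)) (fun m => l (widen_ord (leqnSn n) m))).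
Qed.

Lemma ratio_cvg (s : R) (m : nat) : 0 <= s <= 2 ->
  (fun k : nat => powR ((k.+1)%:R / (k.+1 + m)%N%:R) s) @ \oo --> (1:R).
Proof.
move=> /andP[s0 s2].
apply: (squeeze_cvgr (f := fun k => 1 - 2 * m%:R * harmonic k) (h := fun _ => 1)).
- near=> k.
  set y := (k.+1)%:R / (k.+1 + m)%N%:R.
  have y0 : 0 < y by rewrite divr_gt0 // ltr0n // addSn.
  have y1 : y <= 1 by rewrite ler_pdivrMr ?ltr0n ?addSn // mul1r ler_nat leq_addr.
  apply/andP; split.
  + have h1 : y ^+ 2 <= powR y s.
      rewrite -powR_mulrn; last exact: ltW.
      by apply: ger_powR; rewrite ?y0 ?y1.
    have e : 1 - y = m%:R / (k.+1 + m)%N%:R.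
      rewrite /y natrD; field.
        by apply/negP => /eqP; have := ler0n R k; have := ler0n R m; lra.
    have h2 : 1 - y <= m%:R * harmonic k.
      rewrite e /= ler_wpM2l // lef_pV2 ?posrE ?ltr0n ?addSn // ler_nat leq_addr //.
    apply: (le_trans _ h1).
    have hy : 0 <= (1 - y) ^+ 2 by apply: sqr_ge0.
    nra.
  + by rewrite -(powRr0 y); apply: ger_powR => //; rewrite y0 y1.
- rewrite -[X in _ --> X]subr0; apply: cvgB; first exact: cvg_cst.
  rewrite -(mulr0 (2 * m%:R)); apply: cvgMr; exact: cvg_harmonic.
- exact: cvg_cst.
Unshelve. all: by end_near.
Qed.

Lemma a_to_0 (a : nat -> R) (s c : R) : 1 <= s ->
  (fun k => a k * powR k%:R s) @ \oo --> c -> a @ \oo --> (0:R).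
Proof.
move=> s1 H.
rewrite -(cvg_shiftn 1) /=.
have E : (fun k => a (k + 1)%N) =
  (fun k => (a (k + 1)%N * powR (k + 1)%N%:R s) * (powR (k + 1)%N%:R s)^-1).
  apply: funext => k; rewrite -mulrA divff ?mulr1 //.
have h1 : (fun k => a (k+1)%N * powR (k+1)%N%:R s) @ \oo --> c.
  by move: H; rewrite -(cvg_shiftn 1).
have h2 : (fun k => (powR (k+1)%N%:R s)^-1) @ \oo --> (0:R).
  apply: (squeeze_cvgr (f := fun _ => 0) (h := fun k => harmonic k)).
  - near=> k; apply/andP; split.
      by rewrite invr_ge0 powR_ge0.
    rewrite /= addn1 lef_pV2 ?posrE ?powR_gt0 ?ltr0n //.
    by apply: le1r_powR => //; rewrite ler1n.
  - exact: cvg_cst.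
  - exact: cvg_harmonic.
have := cvgM h1 h2; rewrite mulr0 E; exact.
Unshelve. all: by end_near.
Qed.

Lemma ind_lemma (G : {poly R} -> nat -> R) :
  (forall Q k, G (('X - 1) * Q) k = G Q k.+1 - G Q k) ->
  forall r Q, (forall k, G (('X - 1) ^+ r * Q) k = 0) ->
    G Q @ \oo --> 0 -> forall k, G Q k = 0.
Proof.
move=> HG; elim=> [|r IH] Q H0 HQ.
  by move=> k; rewrite -(mul1r Q) -(expr0 ('X - 1)) H0.
have H1 : forall k, G (('X - 1) * Q) k = 0.
  apply: IH.
    by move=> k; rewrite mulrA -exprSr H0.
  have -> : G (('X - 1) * Q) = fun k => G Q k.+1 - G Q k by apply: funext => k; rewrite HG.
  rewrite -(subr0 0); apply: cvgB => //.
  by move: HQ; rewrite -(cvg_shiftn 1) /=; under eq_fun do rewrite addn1.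
have C : forall k, G Q k = G Q 0.
  elim=> // k IHk; rewrite -IHk; apply/eqP; rewrite -subr_eq0; apply/eqP.
  by rewrite -HG H1.
have E : G Q = fun _ => G Q 0 by apply: funext => k; rewrite C.
move=> k; rewrite C; move: HQ; rewrite E => HQ.
exact: (cvg_unique _ (cvg_cst (G Q 0)) HQ).
Qed.

Lemma rnn_not_lm (n py px : nat) (Wzh : 'M[R]_(py, n.+1)) (A : 'M[R]_n.+1)
  (Whx : 'M[R]_(n.+1, px)) : ~ long_memory (rnn_coef Wzh A Whx).
Proof.
move=> [i [j [dd [/andP[dd0 dd1] [c [c0 Hf]]]]]].
rewrite /rnn_coef in Hf.
set s := dd + 1 in Hf.
have s1 : 1 <= s by rewrite /s lerDr ltW.
have s2 : 0 <= s <= 2 by apply/andP; split; rewrite /s; lra.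
pose a : nat -> R := fun k => (Wzh *m A ^+ k *m Whx) i j.
pose f : nat -> R := fun k : nat => a k * powR k%:R s.
have Hf' : f @ \oo --> c by [].
pose G : {poly R} -> nat -> R := fun (Q : {poly R}) (k : nat) => (Wzh *m (A ^+ k * horner_mx A Q) *m Whx) i j.
have HG : forall Q k, G (('X - 1) * Q) k = G Q k.+1 - G Q k.
  move=> Q k; rewrite /G rmorphM rmorphB /= horner_mx_X rmorph1.
  have -> : A ^+ k * ((A - 1) * horner_mx A Q) =
            A ^+ k.+1 * horner_mx A Q - A ^+ k * horner_mx A Q.
    by rewrite mulrA mulrBr mulr1 -exprSr mulrBl.
  by rewrite mulmxBr mulmxBl [LHS]mxE [X in _ + X]mxE.
have G1 : forall Q k, G Q k = \sum_(m < size Q) Q`_m * a (k + m)%N.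
  move=> Q k; rewrite /G.
  have -> : horner_mx A Q = \sum_(m < size Q) Q`_m *: A ^+ m.
    rewrite -[in LHS](coefK Q) poly_def raddf_sum; apply: eq_bigr => m _.
    by rewrite [LHS]horner_mxZ rmorphXn /= horner_mx_X.
  rewrite mulr_sumr mulmx_sumr mulmx_suml summxE; apply: eq_bigr => m _.
  by rewrite -scalerAr -exprD -scalemxAr -scalemxAl mxE.
have cp0 : char_poly A != 0 by apply: monic_neq0; exact: char_poly_monic.
have [r [q nq Hp]] := multiplicity_XsubC (char_poly A) 1.
rewrite cp0 /= in nq.
rewrite polyC1 in Hp.
have Hr : forall k, G (('X - 1) ^+ r * q) k = 0.
  by move=> k; rewrite mulrC -Hp /G Cayley_Hamilton mulr0 mulmx0 mul0mx mxE.
have a0 : a @ \oo --> (0:R) by exact: (@a_to_0 a s c s1 Hf').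
have Gq0 : G q @ \oo --> (0:R).
  have -> : G q = fun k => \sum_(m < size q) q`_m * a (k + m)%N.
    by apply: funext => k; rewrite G1.
  have := @cvg_sum_ord (size q) (fun m k => q`_m * a (k + m)%N) (fun m => q`_m * 0).
  rewrite big1 => [H|m _]; last by rewrite mulr0.
  apply: H => m; apply: cvgMr.
  by move: a0; rewrite -(cvg_shiftn m).
have Gq : forall k, G q k = 0 by exact: (@ind_lemma G HG r q Hr).
have T : (fun k : nat => G q k.+1 * powR k.+1%:R s) @ \oo --> q.[1] * c.
  have -> : (fun k : nat => G q k.+1 * powR k.+1%:R s) =
     fun k => \sum_(m < size q) q`_m *
        (f (k.+1 + m)%N * powR ((k.+1)%:R / (k.+1 + m)%N%:R) s).
    apply: funext => k; rewrite G1 mulr_suml; apply: eq_bigr => m _.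
    rewrite -mulrA; congr (_ * _).
    have E : ((k.+1 + m)%N%:R * ((k.+1)%:R / (k.+1 + m)%N%:R)) = (k.+1)%:R :> R.
      by rewrite mulrC divfK // pnatr_eq0 addSn.
    rewrite /f -mulrA; congr (_ * _); rewrite -powRM ?divr_ge0 ?ler0n //.
    f_equal; exact: (esym E).
  have Hq1 : q.[1] * c = \sum_(m < size q) q`_m * (c * 1).
    rewrite horner_coef mulr_suml; apply: eq_bigr => i0 _.
    by rewrite expr1n !mulr1.
  rewrite Hq1.
  apply: (@cvg_sum_ord (size q) (fun m k => q`_m *
        (f (k.+1 + m)%N * powR ((k.+1)%:R / (k.+1 + m)%N%:R) s)) (fun m => q`_m * (c * 1))) => m.
  apply: cvgMr; apply: cvgM; last exact: ratio_cvg.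
  move: Hf'; rewrite -(cvg_shiftn m.+1) /=.
  by under eq_fun do rewrite -addSnnS.
have T0 : (fun k : nat => G q k.+1 * powR k.+1%:R s) = fun _ => 0.
  by apply: funext => k; rewrite Gq mul0r.
rewrite T0 in T.
have H0 : q.[1] * c = 0 by exact: (cvg_unique _ T (cvg_cst (0:R))).
move/eqP: H0; rewrite mulf_eq0 (negbTE c0) orbF.
by move: nq; rewrite /root => /negbTE ->.
Qed.
End Aux.

Theorem theorem3 (R : realType) :
  (* MRNNF: can have long memory, for any dimensions and any memory parameter d *)
  (forall (px py ph pm : nat) (d : 'I_px -> R),
     (0 < px)%N -> (0 < py)%N -> (0 < pm)%N ->
     (forall a, 0 < d a < 1/2) ->
     exists (Wzh : 'M[R]_(py, ph)) (Whh : 'M[R]_ph) (Whx : 'M[R]_(ph, px))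
            (Wzm : 'M[R]_(py, pm)) (Wmm : 'M[R]_pm) (Wmf : 'M[R]_(pm, px)),
       long_memory (mrnnf_coef Wzh Whh Whx Wzm Wmm Wmf d)) /\
  (* RNN: never has long memory *)
  (forall (px py ph : nat)
          (Wzh : 'M[R]_(py, ph)) (Whh : 'M[R]_ph) (Whx : 'M[R]_(ph, px)),
     ~ long_memory (rnn_coef Wzh Whh Whx)).
Proof.
split.
- move=> px py ph pm d px0 py0 pm0 hd.
  pose a0 : 'I_px := Ordinal px0.
  pose i0 : 'I_py := Ordinal py0.
  pose j0 : 'I_pm := Ordinal pm0.
  exists 0, 0, 0, (delta_mx i0 j0), 0, (delta_mx j0 a0).
  have [c [c0 Hc]] := @lm_fdw R (d a0) (hd a0).
  exists i0, a0, (d a0); split; first exact: hd a0.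
  exists c; split => //.
  have E : forall k : nat,
      mrnnf_coef (0 : 'M[R]_(py, ph)) 0 0 (delta_mx i0 j0) 0 (delta_mx j0 a0) d k i0 a0
        * powR k%:R (d a0 + 1) = fdw (d a0) k * powR k%:R (d a0 + 1).
    case=> [|k].
      have hd0 : d a0 + 1 != 0.
        by have /andP[h1 _] := hd a0; rewrite gt_eqF // ltr_wpDl // ltW.
      by rewrite powR0 // !mulr0.
    congr (_ * _).
    rewrite /mrnnf_coef /rnn_coef !mul0mx add0r big_ord_recl expr0 mul1mx.
    rewrite big1 ?addr0; last by move=> l _; rewrite exprS mul0r !mul0mx.
    rewrite subn0 mulmxA mul_delta_mx mxE (bigD1 a0) //= big1 ?addr0.
      by rewrite /fd_minus_I_coef /= !mxE !eqxx mul1r.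
    by move=> b nb; rewrite !mxE (negbTE nb) andbF mul0r.
  by rewrite (funext E).
- move=> px py [|n] Wzh Whh Whx.
  + move=> [i [j [dd [_ [c [c0 Hf]]]]]].
    have E : (fun k : nat => rnn_coef Wzh Whh Whx k i j * powR k%:R (dd + 1)) =
             fun _ => 0.
      by apply: funext => k; rewrite /rnn_coef thinmx0 !mul0mx mxE mul0r.
    rewrite E in Hf.
    have : c = 0 by exact: (cvg_unique _ Hf (cvg_cst (0:R))).
    by move/eqP; rewrite (negbTE c0).
  + exact: rnn_not_lm.
Qed.
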